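(* For each $n\ge1$ let $(B_n,X^n(0),Y^n)$ be a random element of $\overline{\mathbb{R}}_+\times\mathbb{R}^2\times D^2$, and let $(\hat X^n,\hat V^n)\in D^2\times D^2$ be the unique solution of \begin{align*} \hat{X}_1^n(t) &= X_1^n(0) + Y^{n}_1(t) + \int_0^t(-\hat{X}_1^n(s)+\hat{X}_2^n(s))\,ds - \hat{V}_1^n(t), \\ \hat{X}_2^n(t) &= X_2^n(0) + Y^{n}_2(t) - \int_0^t\hat{X}_2^n(s)\,ds +\hat{V}_1^n(t)- \hat{V}_2^n(t), \end{align*} with $\hat X_1^n\le0$, $\hat X_2^n\le B_n$, $\hat V_1^n,\hat V_2^n$ nondecreasing nonnegative, $\int_0^\infty \mathbb{1}\{\hat{X}_1^n(t) < 0\}\,d\hat{V}_1^n(t)=0$ and $\int_0^\infty \mathbb{1}\{\hat{X}_2^n(t) < B_n\}\,d\hat{V}_2^n(t)=0$. If the sequences $(X^n(0))_{n\ge1}$ and $(Y_i^n)_{n\ge1}$, $i=1,2$, are stochastically bounded, then $(\hat X^n)_{n\ge1}$ is stochastically bounded in $D^2$ (no boundedness of $B_n$ is required).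
   Context: A sequence of random elements $Z^n$ of $D$ (or $D^k$) is stochastically bounded if for every $t>0$ the sequence of real random variables $\|Z^n\|_t=\sup_{0\le s\le t}|Z^n(s)|$ (max over coordinates for $D^k$) is tight; a sequence of random vectors in $\mathbb{R}^k$ is stochastically bounded if it is tight. $D=D([0,\infty),\mathbb{R})$; $\overline{\mathbb{R}}_+=[0,\infty)\cup\{\infty\}$. *)

(* Defs.v *)
From HB Require Import structures.
From mathcomp Require Import all_boot all_order all_algebra.
From mathcomp Require Import all_classical all_reals all_analysis measurable_realfun.
Set Implicit Arguments. Unset Strict Implicit. Unset Printing Implicit Defensive.
Import Order.TTheory GRing.Theory Num.Theory.
Import numFieldNormedType.Exports.
Local Open Scope classical_set_scope.
Local Open Scope ring_scope.

(* A path of D = D([0,oo),R), represented as a function R -> R of which only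
   the restriction to [0,oo) matters: right-continuous at every t >= 0,
   with left limits at every t > 0. *)
Definition cadlag {R : realType} (f : R -> R) : Prop :=
  (forall t : R, 0 <= t -> f x @[x --> t^'+] --> f t) /\
  (forall t : R, 0 < t -> cvg (f x @[x --> t^'-])).

Definition supnorm {R : realType} (f : R -> R) (t : R) : \bar R :=
  ereal_sup [set (`|f s|)%:E | s in `[0, t]].

(* Tightness of a sequence of nonnegative (extended-)real random variables
   Z n defined on probability spaces (Omega n, P n):
   for every eps > 0 there is M such that, for all n, with probability at
   least 1 - eps, Z n <= M.  (Stated with an inner probability, i.e. via
   a measurable event on which the bound holds; for measurable Z n this is
   P(Z n > M) <= eps.) *)
Definition tight_seq {R : realType} (d : nat -> measure_display)
  (Omega : forall n, measurableType (d n))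
  (P : forall n, probability (Omega n) R)
  (Z : forall n, Omega n -> \bar R) : Prop :=
  forall eps : R, 0 < eps -> exists M : R, forall n : nat,
    exists A : set (Omega n), measurable A /\
      ((1 - eps)%:E <= P n A)%E /\ (forall w, A w -> (Z n w <= M%:E)%E).

Definition stoch_bounded_D2 {R : realType} (d : nat -> measure_display)
  (Omega : forall n, measurableType (d n))
  (P : forall n, probability (Omega n) R)
  (Z1 Z2 : forall n, Omega n -> R -> R) : Prop :=
  forall t : R, 0 < t ->
    tight_seq P (fun n w => Order.max (supnorm (Z1 n w) t) (supnorm (Z2 n w) t)).

Definition stoch_bounded_R2 {R : realType} (d : nat -> measure_display)
  (Omega : forall n, measurableType (d n))
  (P : forall n, probability (Omega n) R)
  (z1 z2 : forall n, Omega n -> R) : Prop :=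
  tight_seq P (fun n w => (Order.max `|z1 n w| `|z2 n w|)%:E).

Definition ext0 {R : realType} (V : R -> R) : R -> R :=
  fun t => if (0 <= t)%R then V t else 0.

(* The Lebesgue-Stieltjes (outer) measure dV of a set S of times, for a
   nondecreasing cadlag V on [0,oo) extended by 0 on (-oo,0) (so that dV
   has an atom of mass V(0) at 0). *)
Definition dLS {R : realType} (V : R -> R) (S : set R) : \bar R :=
  mu_ext (wlength (ext0 V)) (S : set (ocitv_type R)).

Definition no_charge {R : realType} (V : R -> R) (S : set R) : Prop :=
  dLS V ([set t | 0 <= t] `&` S) = 0%E.

(* Main.v *)
Require Import Defs.
From HB Require Import structures.
From mathcomp Require Import all_boot all_order all_algebra.
From mathcomp Require Import all_classical all_reals all_analysis measurable_realfun.
From mathcomp Require Import lra.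
Set Implicit Arguments. Unset Strict Implicit. Unset Printing Implicit Defensive.
Import Order.TTheory GRing.Theory Num.Theory.
Import numFieldNormedType.Exports.
Local Open Scope classical_set_scope.
Local Open Scope ring_scope.

Section Skor.
Context {R : realType}.

Lemma mu_ext_single_ge (W : cumulative R R) (tau c : R) :
  (forall a, a < tau -> W a <= c) ->
  ((W tau - c)%:E <= mu_ext (wlength W) ([set tau] : set (ocitv_type R)))%E.
Proof.
move=> Hc; rewrite /mu_ext; apply: le_ereal_inf_tmp => x [F [mF cov] <-].
have [k _ Fk] := cov tau erefl.
have wge0 : forall n, (0 <= wlength W (F n))%E.
  by move=> n; exact: wlength_ge0.
rewrite (@nneseriesD1 _ _ k xpredT) //.
apply: (@le_trans _ _ (wlength W (F k))); last first.
  by rewrite leeDl// nneseries_ge0// => n _ _; exact: wge0.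
have := mF k; move=> /= /ocitvP [Fk0|[[a b] /= ab Fkab]].
  by move: Fk; rewrite Fk0.
move: Fk; rewrite Fkab /= in_itv /= => /andP[atau tb].
rewrite wlength_itv_bnd; last exact: ltW.
rewrite lee_fin lerB//.
  exact: cumulative_is_nondecreasing.
exact: Hc.
Qed.

Lemma mu_ext_ocitv (W : cumulative R R) (a b : R) : a <= b ->
  mu_ext (wlength W) (`]a, b]%classic : set (ocitv_type R)) = (W b - W a)%:E.
Proof.
move=> ab; rewrite measurable_mu_extE /=; last exact: is_ocitv.
by rewrite wlength_itv_bnd.
Qed.


Lemma skor (W : cumulative R R) (N : set R) (s0 t : R) :
  mu_ext (wlength W) (N : set (ocitv_type R)) = 0%E -> s0 < t ->
  W t - W s0 <= 1 \/ exists q, [/\ s0 < q, q <= t, ~ N q & W t - 1 < W q].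
Proof.
move=> N0 s0t.
have Wnd : forall x y, x <= y -> W x <= W y.
  by move=> x y xy; exact: cumulative_is_nondecreasing.
case: (lerP (W t - W s0) 1) => [h|h]; [by left|right].
apply: contrapT => Hq.
have HN : forall q, s0 < q -> q <= t -> W t - 1 < W q -> N q.
  move=> q h1 h2 h3; apply: contrapT => nq; apply: Hq; exists q; by split.
set c := W t - 1.
have Ws0c : W s0 < c by rewrite /c ltrBrDl addrC -ltrBrDl.
pose A := [set q | s0 < q /\ q <= t /\ c < W q].
have At : A t by split => //; split => //; rewrite /c ltrBlDr ltrDl.
have lbA : has_lbound A by exists s0 => q [] /ltW.
have ne : nonempty A by exists t.
pose tau := inf A.
have s0tau : s0 <= tau by apply: lb_le_inf => // q [] /ltW.
have taut : tau <= t by exact: ge_inf.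
have Wle : forall a, a < tau -> W a <= c.
  move=> a atau; case: (lerP a s0) => [as0|s0a].
    by apply: ltW; apply: le_lt_trans (Wnd _ _ as0) Ws0c.
  rewrite leNgt; apply/negP => ca.
  have : A a by split => //; split => //; exact: (ltW (lt_le_trans atau taut)).
  by move=> /(ge_inf lbA); rewrite leNgt atau.
have le0 : forall X : set R, X `<=` N ->
    (mu_ext (wlength W) (X : set (ocitv_type R)) <= 0)%E.
  by move=> X XN; rewrite -N0; apply: le_mu_ext.
case: (lerP (W tau) c) => [Wtc|cWt].
- have sub : `]tau, t]%classic `<=` N.
    move=> q /=; rewrite in_itv /= => /andP[tq qt].
    have [y Ay yq] := inf_lt ne tq.
    case: Ay => s0y [yt cy].
    apply: HN => //; first exact: (lt_trans s0y yq).
    exact: (lt_le_trans cy (Wnd _ _ (ltW yq))).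
  have := le0 _ sub; rewrite mu_ext_ocitv // lee_fin subr_le0 => Wtt.
  by have := le_trans Wtt Wtc; rewrite /c lerBrDl addrC -lerBrDl subrr ler10.
- have Ntau : N tau.
    apply: HN => //.
    rewrite lt_neqAle s0tau andbT; apply/negP => /eqP e.
    by move: cWt; rewrite -e => /(lt_trans Ws0c); rewrite ltxx.
  have sub : [set tau] `<=` N by move=> q ->.
  have := le_trans (mu_ext_single_ge Wle) (le0 _ sub).
  by rewrite lee_fin subr_le0 leNgt cWt.
Qed.

End Skor.
Section Ext0.
Context {R : realType}.

Lemma ext0_rc (V : R -> R) : cadlag V -> right_continuous (ext0 V).
Proof.
move=> [rc _] x.
case: (lerP 0 x) => [x0|x0].
  rewrite /ext0 x0.
  apply: cvg_trans (near_eq_cvg _) (rc x x0).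
  near=> y; rewrite ifT //; apply: (le_trans x0); apply: ltW; near: y.
  exact: nbhs_right_gt.
rewrite /ext0 ifF; last by apply/negbTE; rewrite -ltNge.
apply: cvg_trans (near_eq_cvg _) (cvg_cst (0:R)).
near=> y; rewrite ifF //; apply/negbTE; rewrite -ltNge; near: y.
exact: nbhs_right_lt.
Unshelve. all: by end_near. Qed.

Lemma ext0_nd (V : R -> R) : 0 <= V 0 ->
  (forall s t, 0 <= s -> s <= t -> V s <= V t) -> nondecreasing (ext0 V).
Proof.
move=> V0 Vnd x y xy; rewrite /ext0.
case: (lerP 0 x) => x0; case: (lerP 0 y) => y0 //.
- by apply: Vnd.
- by move: (le_lt_trans x0 (le_lt_trans xy y0)); rewrite ltxx.
- by apply: le_trans V0 (Vnd _ _ _ y0).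
Qed.

End Ext0.

Lemma skorV {R : realType} (V : R -> R) (S : set R) (s0 t : R) :
  cadlag V -> 0 <= V 0 -> (forall s t, 0 <= s -> s <= t -> V s <= V t) ->
  no_charge V S -> s0 < t ->
  ext0 V t - ext0 V s0 <= 1 \/
  exists q, [/\ s0 < q, q <= t, ~ ([set u | 0 <= u] `&` S) q & ext0 V t - 1 < ext0 V q].
Proof.
move=> cV V0 Vnd nc s0t.
pose W : cumulative R R := HB.pack (ext0 V)
  (isCumulative.Build R _ R (ext0 V) (ext0_nd V0 Vnd) (ext0_rc cV)).
exact: (@skor R W _ s0 t nc s0t).
Qed.
Section Meas.
Context {R : realType}.

Lemma step_measurable (f : R -> R) (k r : R) : 0 < k ->
  measurable_fun `[0, r] (fun x => f ((Num.truncn (x * k)).+1%:R / k)).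
Proof.
move=> k0 _ Y mY.
rewrite (_ : _ `&` _ = \bigcup_n (`[0, r] `&` (`[n%:R / k, n.+1%:R / k[%classic
      `&` (if pselect (Y (f (n.+1%:R / k))) then setT else set0)))).
  apply: bigcupT_measurable => n; apply: measurableI; first exact: measurable_itv.
  apply: measurableI; first exact: measurable_itv.
  by case: pselect => ?; [exact: measurableT|exact: measurable0].
apply/seteqP; split => x /=.
  move=> [Dx Yx]; exists (Num.truncn (x * k)) => //; split => //.
  have x0 : 0 <= x by move: Dx; rewrite /= in_itv /= => /andP[].
  have /andP[h1 h2] := truncn_itv (mulr_ge0 x0 (ltW k0)).
  split; first by rewrite /= in_itv /= ler_pdivrMr // ltr_pdivlMr // h1.
  by case: pselect.
move=> [n _ [Dx [xn]]]; case: pselect => // Yn _; split => //.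
have x0 : 0 <= x by move: Dx; rewrite /= in_itv /= => /andP[].
move: xn; rewrite /= in_itv /= ler_pdivrMr // ltr_pdivlMr // => xn.
by rewrite (truncn_def xn).
Qed.

Lemma cadlag_measurable (f : R -> R) (r : R) :
  (forall t, 0 <= t -> f x @[x --> t^'+] --> f t) -> measurable_fun `[0, r] f.
Proof.
move=> rc.
pose k (n : nat) : R := n.+1%:R.
pose u (n : nat) (x : R) := (Num.truncn (x * k n)).+1%:R / k n.
apply: (@measurable_fun_cvg _ _ _ _ (fun n x => f (u n x))).
  by move=> n; apply: step_measurable; rewrite /k ltr0Sn.
move=> x /=; rewrite in_itv /= => /andP[x0 _].
have k0 : forall n, 0 < k n by move=> n; rewrite /k ltr0Sn.
apply: ((cvg_at_rightP f x (f x)).1 (rc x x0) (u ^~ x)); split.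
  by move=> n; rewrite /u ltr_pdivlMr //; exact: truncnS_gt.
apply: (@squeeze_cvgr _ _ _ _ (fun _ => x) (fun n => x + harmonic n)).
- near=> n; apply/andP; split.
    by rewrite /u ler_pdivlMr //; apply: ltW; exact: truncnS_gt.
  rewrite /u /harmonic /= -/(k n) ler_pdivrMr // mulrDl mulVf; last first.
    by rewrite gt_eqF.
  rewrite -natr1 lerD2r truncn_le; exact: mulr_ge0 x0 (ltW (k0 n)).
- exact: cvg_cst.
- rewrite -[X in _ --> X]addr0; apply: cvgD; first exact: cvg_cst.
  exact: cvg_harmonic.
Unshelve. all: by end_near. Qed.

End Meas.
Section Bdd.
Context {R : realType}.

Lemma cadlag_bounded (f : R -> R) (T : R) : cadlag f ->
  exists M, forall s, 0 <= s -> s <= T -> `|f s| <= M.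
Proof.
move=> [rc ll].
have cK : compact `[0, T]%classic by exact: segment_compact.
move/compact_near_coveringP/near_covering_withinP : cK => cov.
have H : \forall M \near +oo, `[0, T]%classic `<=` (fun s => `|f s| <= M).
  apply: cov => x; rewrite /= in_itv /= => /andP[x0 xT].
  pose l := lim (f z @[z --> x^'-]).
  pose c := `|f x| + `|l| + 1.
  have F1 : \forall y \near x, x < y -> `|f y| <= c.
    have := rc x x0 => /(@cvgr_dist_lt _ R^o) /(_ _ ltr01); rewrite near_withinE.
    apply: filterS => y Hy xy; have := Hy xy => /= d.
    rewrite -(subrK (f x) (f y)); apply: le_trans (ler_normD _ _) _.
    rewrite /c addrC -addrA lerD2l distrC; apply: (le_trans (ltW d)).
    by rewrite lerDr.
  have F2 : \forall y \near x, y < x -> 0 <= y -> `|f y| <= c.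
    case: (ltrP 0 x) => [xp|xn].
      have := ll x xp => /(@cvgr_dist_lt _ R^o) /(_ _ ltr01); rewrite near_withinE.
      apply: filterS => y Hy yx _; have := Hy yx => /= d.
      rewrite -(subrK l (f y)); apply: le_trans (ler_normD _ _) _.
      rewrite /c addrC -addrA [`|f x| + _]addrC -addrA lerD2l distrC.
      apply: (le_trans (ltW d)); rewrite addrC lerDr //.
    by near=> y => yx y0; move: (le_lt_trans y0 (lt_le_trans yx xn)); rewrite ltxx.
  near=> y M => /=; rewrite in_itv /= => /andP[y0 yT].
  have cM : c <= M by near: M; apply: nbhs_pinfty_ge; rewrite num_real.
  case: (ltgtP y x) => [yx|xy|->].
  - apply: le_trans cM; move: yx y0; near: y; exact: F2.
  - apply: le_trans cM; move: xy; near: y; exact: F1.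
  - by apply: le_trans cM; rewrite /c -addrA lerDl.
have [c [_ Hc]] := H.
exists (`|c| + 1) => s s0 sT; apply: (Hc (`|c| + 1)).
  by apply: (le_lt_trans (ler_norm c)); rewrite ltrDl.
by rewrite /= in_itv /= s0 sT.
Unshelve. all: by end_near. Qed.
End Bdd.
Section Int.
Context {R : realType}.
Notation mu := (@lebesgue_measure R).

Lemma bdd_integrable (f : R -> R) (D : set R) (G : R) : measurable D ->
  (mu D < +oo)%E -> measurable_fun D f ->
  (forall u, D u -> `|f u| <= G) -> mu.-integrable D (EFin \o f).
Proof.
move=> mD Dfin mf fG; apply: measurable_bounded_integrable => //.
rewrite /bounded_near; near=> M => u /= Du; apply: le_trans (fG u Du) _.
near: M; apply: nbhs_pinfty_ge; exact: num_real.
Unshelve. all: by end_near. Qed.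

Lemma int_incr (f : R -> R) (s0 r m G : R) :
  measurable_fun `[0, r] f -> (forall u, 0 <= u -> u <= r -> `|f u| <= G) ->
  0 <= s0 -> s0 <= r -> (forall u, s0 < u -> u <= r -> `|f u| <= m) ->
  `|Rintegral mu `[0, r] f - Rintegral mu `[0, s0] f| <= (r - s0) * m.
Proof.
move=> mf fG s00 s0r fm.
have [->|ne] := eqVneq s0 r; first by rewrite !subrr normr0 mul0r.
have s0r' : s0 < r by rewrite lt_neqAle ne s0r.
have m0 : 0 <= m by exact: le_trans (normr_ge0 _) (fm r s0r' (lexx r)).
have ifr : mu.-integrable `[0, r] (EFin \o f).
  apply: (bdd_integrable (G := G)) => //.
  - by rewrite lebesgue_measure_itv; case: ifP => _; rewrite ?ltry.
  - by move=> u /=; rewrite in_itv /= => /andP[]; apply: fG.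
rewrite Rintegral_itvB //.
have sub : `]s0, r]%classic `<=` `[0, r]%classic.
  by move=> u /=; rewrite !in_itv /= => /andP[su ->]; rewrite andbT (le_trans s00 (ltW su)).
have ifs : mu.-integrable `]s0, r] (EFin \o f).
  by apply: integrableS ifr => //; exact: measurable_itv.
have H0 : `|Rintegral mu `]s0, r] f| <= Rintegral mu `]s0, r] (fun t => `|f t|).
  by apply: le_normr_Rintegral => //; exact: measurable_itv.
apply: (le_trans H0).
have mfs : measurable_fun `]s0, r] f.
  by apply: measurable_funS mf => //; exact: measurable_itv.
have H1 : Rintegral mu `]s0, r] (fun t => `|f t|) <= Rintegral mu `]s0, r] (fun=> m).
  apply: le_Rintegral.
  - exact: measurable_itv.
  - exact: integrable_norm.
  - apply: (@bdd_integrable (fun=> m) _ `|m|).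
    + exact: measurable_itv.
    + by rewrite lebesgue_measure_itv; case: ifP => _; rewrite ?ltry.
    + exact: measurable_cst.
    + by move=> u _.
  by move=> u /=; rewrite in_itv /= => /andP[]; apply: fm.
apply: le_trans H1 _.
rewrite Rintegral_cst; last exact: measurable_itv.
have -> : fine (mu `]s0, r]%classic) = r - s0.
  by rewrite lebesgue_measure_itv /= lte_fin s0r' -EFinD.
by rewrite mulrC.
Qed.
End Int.
Section Local.
Context {R : realType}.

Lemma local_bound (J : set R) (x1 x2 v1 v2 e1 e2 : R -> R) (b1 b2 y : R) :
  (forall r, J r -> x1 r = b1 + e1 r - v1 r) ->
  (forall r, J r -> x2 r = b2 + e2 r + v1 r - v2 r) ->
  (forall r, J r -> `|e1 r| <= y /\ `|e2 r| <= y) ->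
  (forall r, J r -> 0 <= v1 r /\ 0 <= v2 r) ->
  (forall r, J r -> v1 r <= 1 \/ exists q, [/\ J q, x1 q = 0 & v1 r - 1 < v1 q]) ->
  (forall r, J r -> v2 r <= 1 \/ exists q, [/\ J q, 0 <= x2 q & v2 r - 1 < v2 q]) ->
  forall r, J r -> `|x1 r| + `|x2 r| <= 4 * (`|b1| + `|b2|) + 6 * y + 4.
Proof.
move=> H1 H2 He Hv Hs1 Hs2.
have nb1 := normr_ge0 b1; have nb2 := normr_ge0 b2.
have lb1 : - `|b1| <= b1 <= `|b1| by rewrite -ler_norml.
have lb2 : - `|b2| <= b2 <= `|b2| by rewrite -ler_norml.
move: lb1 lb2 => /andP[lb1 ub1] /andP[lb2 ub2].
have eb : forall r, J r -> [/\ - y <= e1 r, e1 r <= y, - y <= e2 r & e2 r <= y].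
  move=> r Jr; have [h1 h2] := He r Jr.
  by move: h1 h2; rewrite !ler_norml => /andP[? ?] /andP[? ?]; split.
have y0 : forall r, J r -> 0 <= y.
  by move=> r Jr; have [h1 _] := He r Jr; exact: le_trans (normr_ge0 _) h1.
have V1b : forall r, J r -> v1 r <= `|b1| + y + 1.
  move=> r Jr; have := y0 r Jr; case: (Hs1 r Jr) => [h|[q [Jq xq vq]]] yy.
    lra.
  have := H1 q Jq; rewrite xq => e; have [? ? ? ?] := eb q Jq; lra.
have V2b : forall r, J r -> v2 r <= `|b1| + `|b2| + 2 * y + 2.
  move=> r Jr; have := y0 r Jr; case: (Hs2 r Jr) => [h|[q [Jq xq vq]]] yy.
    lra.
  have := H2 q Jq => e; have := V1b q Jq; have [? ? ? ?] := eb q Jq; lra.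
move=> r Jr.
have := V1b r Jr; have := V2b r Jr; have [? ? ? ?] := eb r Jr.
have [? ?] := Hv r Jr; have := H1 r Jr; have := H2 r Jr.
have := y0 r Jr.
move=> yy E2 E1 V2 V1.
have a1 : `|x1 r| <= 2 * `|b1| + 2 * y + 1 by rewrite ler_norml; apply/andP; split; lra.
have a2 : `|x2 r| <= 2 * `|b1| + 2 * `|b2| + 4 * y + 3 by rewrite ler_norml; apply/andP; split; lra.
lra.
Qed.

Lemma sup_trick (J : set R) (g : R -> R) (C G : R) :
  (exists r, J r) -> (forall r, J r -> g r <= G) ->
  (forall m, (forall r, J r -> g r <= m) -> forall r, J r -> g r <= C + m / 2) ->
  forall r, J r -> g r <= 2 * C.
Proof.
move=> [r0 Jr0] gG H r Jr.
pose S := g @` J.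
have ne : S !=set0 by exists (g r0), r0.
have ub : ubound S G by move=> _ [u Ju <-]; exact: gG.
have le_m : forall u, J u -> g u <= sup S.
  by move=> u Ju; apply: ub_le_sup; [exists G|exists u].
have := H _ le_m => H'.
have : sup S <= C + sup S / 2.
  by apply: ge_sup => // _ [u Ju <-]; exact: H'.
have := le_m r Jr; lra.
Qed.

End Local.

Fixpoint beta {R : realType} (y : R) (k : nat) : R :=
  if k is k'.+1 then 8 * beta y k' + 24 * y + 8 else 40 * y + 8.

Lemma beta_ge0 {R : realType} (y : R) k : 0 <= y -> 0 <= beta y k.
Proof. move=> y0; elim: k => [|k IH] /=; lra. Qed.

Lemma beta_le {R : realType} (y : R) k : 0 <= y -> beta y k <= beta y k.+1.
Proof. move=> y0; have := beta_ge0 k y0 => /=; lra. Qed.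

Lemma eq_aux1 {R : realType} (a Yu Yc Iu Ic Vu Vc : R) :
  a + Yu + Iu - Vu = (a + Yc + Ic - Vc) + ((Yu - Yc) + (Iu - Ic)) - (Vu - Vc).
Proof. lra. Qed.

Lemma eq_aux2 {R : realType} (a Yu Yc Iu Ic Wu Wc Vu Vc : R) :
  a + Yu - Iu + Wu - Vu =
  (a + Yc - Ic + Wc - Vc) + ((Yu - Yc) - (Iu - Ic)) + (Wu - Wc) - (Vu - Vc).
Proof. lra. Qed.

Section Det.
Context {R : realType}.
Notation mu := (@lebesgue_measure R).

Lemma det (x1 x2 V1 V2 Y1 Y2 : R -> R) (a1 a2 : R) (B : \bar R) (T y : R) :
  cadlag x1 -> cadlag x2 -> cadlag V1 -> cadlag V2 ->
  (forall t, 0 <= t ->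
     x1 t = a1 + Y1 t + Rintegral mu `[0, t] (fun s => - x1 s + x2 s) - V1 t) ->
  (forall t, 0 <= t ->
     x2 t = a2 + Y2 t - Rintegral mu `[0, t] (fun s => x2 s) + V1 t - V2 t) ->
  (forall t, 0 <= t -> x1 t <= 0) ->
  (0 <= B)%E ->
  (forall t, 0 <= t -> 0 <= V1 t /\ 0 <= V2 t) ->
  (forall s t, 0 <= s -> s <= t -> V1 s <= V1 t /\ V2 s <= V2 t) ->
  no_charge V1 [set t | x1 t < 0] ->
  no_charge V2 [set t | ((x2 t)%:E < B)%E] ->
  0 <= y -> `|a1| <= y -> `|a2| <= y ->
  (forall s, 0 <= s -> s <= T -> `|Y1 s| <= y /\ `|Y2 s| <= y) ->
  forall s, 0 <= s -> s <= T -> `|x1 s| + `|x2 s| <= beta y (Num.truncn (12 * T)).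
Proof.
move=> cx1 cx2 cV1 cV2 E1 E2 x1le0 B0 Vge0 Vmon nc1 nc2 y0 a1y a2y Yb.
have [G1 HG1] := cadlag_bounded T cx1.
have [G2 HG2] := cadlag_bounded T cx2.
have V1nd : forall s t, 0 <= s -> s <= t -> V1 s <= V1 t.
  by move=> s t s0 st; have [] := Vmon s t s0 st.
have V2nd : forall s t, 0 <= s -> s <= t -> V2 s <= V2 t.
  by move=> s t s0 st; have [] := Vmon s t s0 st.
have V10 : 0 <= V1 0 by have [] := Vge0 0 (lexx 0).
have V20 : 0 <= V2 0 by have [] := Vge0 0 (lexx 0).
have mf1 : forall r : R, measurable_fun `[0, r] (fun s => - x1 s + x2 s).
  move=> r; apply: cadlag_measurable => t t0.
  apply: cvgD; [apply: cvgN; exact: cx1.1|exact: cx2.1].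
have mf2 : forall r : R, measurable_fun `[0, r] (fun s => x2 s).
  by move=> r; apply: cadlag_measurable => t t0; exact: cx2.1.
have inc1 : forall s0 r m : R, 0 <= s0 -> s0 <= r -> r <= T ->
    (forall u, s0 < u -> u <= r -> `|x1 u| + `|x2 u| <= m) ->
    `|Rintegral mu `[0, r] (fun s => - x1 s + x2 s) -
      Rintegral mu `[0, s0] (fun s => - x1 s + x2 s)| <= (r - s0) * m.
  move=> s0 r m s00 s0r rT Hm; apply: (int_incr (G := G1 + G2)) => //.
    move=> u u0 ur; apply: le_trans (ler_normD _ _) _; rewrite normrN.
    by apply: lerD; [apply: HG1|apply: HG2]; rewrite // (le_trans ur rT).
  move=> u su ur; apply: le_trans (Hm u su ur).
  by apply: le_trans (ler_normD _ _) _; rewrite normrN.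
have inc2 : forall s0 r m : R, 0 <= s0 -> s0 <= r -> r <= T ->
    (forall u, s0 < u -> u <= r -> `|x1 u| + `|x2 u| <= m) ->
    `|Rintegral mu `[0, r] (fun s => x2 s) -
      Rintegral mu `[0, s0] (fun s => x2 s)| <= (r - s0) * m.
  move=> s0 r m s00 s0r rT Hm; apply: (int_incr (G := G2)) => //.
    by move=> u u0 ur; apply: HG2; rewrite // (le_trans ur rT).
  move=> u su ur; apply: le_trans (Hm u su ur).
  by rewrite lerDr.
have I0 : forall f : R -> R, Rintegral mu `[0, 0] f = 0.
  by move=> f; rewrite set_itv1 Rintegral_set1.
have ext0E : forall (V : R -> R) t, 0 <= t -> ext0 V t = V t.
  by move=> V t t0; rewrite /ext0 t0.
have ext0N : forall (V : R -> R) t, t < 0 -> ext0 V t = 0.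
  by move=> V t t0; rewrite /ext0 ifF //; apply/negbTE; rewrite -ltNge.
have SK1 : forall s0 t, 0 <= s0 -> s0 < t -> V1 t - V1 s0 <= 1 \/
    exists q, [/\ s0 < q, q <= t, x1 q = 0 & V1 t - 1 < V1 q].
  move=> s0 t s00 s0t; have t0 : 0 <= t by exact: (le_trans s00 (ltW s0t)).
  case: (skorV cV1 V10 V1nd nc1 s0t); rewrite !ext0E //.
    by left.
  move=> [q [sq qt nq vq]]; right; have q0 : 0 <= q by exact: (le_trans s00 (ltW sq)).
  exists q; split => //; last by rewrite (ext0E _ q) in vq.
  apply/le_anti; rewrite x1le0 //=; rewrite leNgt; apply/negP => h; apply: nq; by split.
have SK1' : forall t, 0 <= t -> V1 t <= 1 \/
    exists q, [/\ 0 <= q, q <= t, x1 q = 0 & V1 t - 1 < V1 q].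
  move=> t t0; have m1t : -1 < t by exact: (lt_le_trans (ltrN10 R) t0).
  case: (skorV cV1 V10 V1nd nc1 m1t) => [h|[q [sq qt nq vq]]].
    by left; move: h; rewrite (ext0E _ t) // (ext0N _ (-1)) ?ltrN10 // subr0.
  rewrite (ext0E _ t) // in vq.
  case: (ltrP q 0) => [qn|q0].
    by left; move: vq; rewrite ext0N // => vq; lra.
  right; exists q; split => //; last by rewrite (ext0E _ q) in vq.
  apply/le_anti; rewrite x1le0 //=; rewrite leNgt; apply/negP => h; apply: nq; by split.
have x2B : forall q, 0 <= q -> ~ ([set u | 0 <= u] `&` [set t | ((x2 t)%:E < B)%E]) q -> 0 <= x2 q.
  move=> q q0 nq; rewrite -lee_fin; apply: le_trans B0 _; rewrite leNgt; apply/negP => h.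
  by apply: nq; split.
have SK2 : forall s0 t, 0 <= s0 -> s0 < t -> V2 t - V2 s0 <= 1 \/
    exists q, [/\ s0 < q, q <= t, 0 <= x2 q & V2 t - 1 < V2 q].
  move=> s0 t s00 s0t; have t0 : 0 <= t by exact: (le_trans s00 (ltW s0t)).
  case: (skorV cV2 V20 V2nd nc2 s0t); rewrite !ext0E //.
    by left.
  move=> [q [sq qt nq vq]]; right; have q0 : 0 <= q by exact: (le_trans s00 (ltW sq)).
  exists q; split => //; last by rewrite (ext0E _ q) in vq.
  exact: x2B.
have SK2' : forall t, 0 <= t -> V2 t <= 1 \/
    exists q, [/\ 0 <= q, q <= t, 0 <= x2 q & V2 t - 1 < V2 q].
  move=> t t0; have m1t : -1 < t by exact: (lt_le_trans (ltrN10 R) t0).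
  case: (skorV cV2 V20 V2nd nc2 m1t) => [h|[q [sq qt nq vq]]].
    by left; move: h; rewrite (ext0E _ t) // (ext0N _ (-1)) ?ltrN10 // subr0.
  rewrite (ext0E _ t) // in vq.
  case: (ltrP q 0) => [qn|q0].
    by left; move: vq; rewrite ext0N // => vq; lra.
  right; exists q; split => //; last by rewrite (ext0E _ q) in vq.
  exact: x2B.
have Q : forall k : nat, forall s, 0 <= s -> s <= T -> s <= k.+1%:R / 12 ->
    `|x1 s| + `|x2 s| <= beta y k.
  elim=> [|k IH].
    move=> s s0 sT sh.
    pose J := fun r : R => [/\ 0 <= r, r <= T & r <= 1 / 12].
    have J0 : J 0 by split => //; lra.
    have := @sup_trick R J (fun r => `|x1 r| + `|x2 r|)
      (4 * (`|a1| + `|a2|) + 12 * y + 4) (G1 + G2).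
    move=> /(_ _ _ _ s) => H; apply: le_trans (H _ _ _ _) _.
    - by exists 0.
    - by move=> r [r0 rT _]; apply: lerD; [apply: HG1|apply: HG2].
    - move=> m Hm r Jr.
      have m0 : 0 <= m.
        by apply: le_trans (Hm 0 J0); apply: addr_ge0; exact: normr_ge0.
      have := @local_bound R J x1 x2 V1 V2
        (fun r => Y1 r + Rintegral mu `[0, r] (fun s => - x1 s + x2 s))
        (fun r => Y2 r - Rintegral mu `[0, r] (fun s => x2 s)) a1 a2 (2 * y + m / 12).
      move=> /(_ _ _ _ _ _ _ r Jr) => L.
      apply: le_trans (L _ _ _ _ _ _) _.
      + by move=> u [u0 _ _]; rewrite {1}E1 // addrA.
      + by move=> u [u0 _ _]; rewrite {1}E2 // addrA.
      + move=> u [u0 uT uh]; have [Y1u Y2u] := Yb u u0 uT.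
        have Hmu : forall v, 0 < v -> v <= u -> `|x1 v| + `|x2 v| <= m.
          move=> v v0 vu; apply: Hm; split; [exact: ltW|exact: le_trans vu uT|exact: le_trans vu uh].
        have i1 := inc1 0 u m (lexx 0) u0 uT Hmu; rewrite I0 subr0 subr0 in i1.
        have i2 := inc2 0 u m (lexx 0) u0 uT Hmu; rewrite I0 subr0 subr0 in i2.
        have um : u * m <= m / 12 by nra.
        split; (apply: le_trans (ler_normD _ _) _); rewrite ?normrN; lra.
      + by move=> u [u0 _ _]; exact: Vge0.
      + move=> u [u0 uT uh]; case: (SK1' u u0) => [h|[q [q0 qu xq vq]]]; first by left.
        right; exists q; split => //; split => //; [exact: le_trans qu uT|exact: le_trans qu uh].
      + move=> u [u0 uT uh]; case: (SK2' u u0) => [h|[q [q0 qu xq vq]]]; first by left.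
        right; exists q; split => //; split => //; [exact: le_trans qu uT|exact: le_trans qu uh].
      + lra.
    - by rewrite /= /J; split => //; lra.
    - move=> /=; lra.
  move=> s s0 sT sh.
  case: (lerP s (k.+1%:R / 12)) => [ss1|s1s].
    exact: le_trans (IH s s0 sT ss1) (beta_le k y0).
  pose c : R := k.+1%:R / 12.
  have c0 : 0 <= c by rewrite /c divr_ge0.
  have cT : c <= T by exact: le_trans (ltW s1s) sT.
  have Bc := IH c c0 cT (lexx _).
  have e : k.+2%:R / 12 = c + 1 / 12 :> R.
    by rewrite /c -[k.+2]addn1 natrD mulrDl.
  pose J := fun r : R => [/\ c <= r, r <= T & r <= c + 1 / 12].
  have Jc : J c by split => //; lra.
  have := @sup_trick R J (fun r => `|x1 r| + `|x2 r|)
    (4 * (`|x1 c| + `|x2 c|) + 12 * y + 4) (G1 + G2).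
  move=> /(_ _ _ _ s) => H; apply: le_trans (H _ _ _ _) _.
  - by exists c.
  - move=> r [cr rT _]; apply: lerD; [apply: HG1|apply: HG2] => //; exact: le_trans c0 cr.
  - move=> m Hm r Jr.
    have m0 : 0 <= m.
      by apply: le_trans (Hm c Jc); apply: addr_ge0; exact: normr_ge0.
    have := @local_bound R J x1 x2 (fun r => V1 r - V1 c) (fun r => V2 r - V2 c)
      (fun r => (Y1 r - Y1 c) + (Rintegral mu `[0, r] (fun s => - x1 s + x2 s)
                                - Rintegral mu `[0, c] (fun s => - x1 s + x2 s)))
      (fun r => (Y2 r - Y2 c) - (Rintegral mu `[0, r] (fun s => x2 s)
                                - Rintegral mu `[0, c] (fun s => x2 s)))
      (x1 c) (x2 c) (2 * y + m / 12).
    move=> /(_ _ _ _ _ _ _ r Jr) => L.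
    apply: le_trans (L _ _ _ _ _ _) _.
    + move=> u [cu _ _]; have u0 : 0 <= u by exact: le_trans c0 cu.
      rewrite {1}(E1 u u0) {1}(E1 c c0); exact: eq_aux1.
    + move=> u [cu _ _]; have u0 : 0 <= u by exact: le_trans c0 cu.
      rewrite {1}(E2 u u0) {1}(E2 c c0); exact: eq_aux2.
    + move=> u [cu uT uh]; have u0 : 0 <= u by exact: le_trans c0 cu.
      have [Y1u Y2u] := Yb u u0 uT.
      have [Y1c Y2c] := Yb c c0 cT.
      have Hmu : forall v, c < v -> v <= u -> `|x1 v| + `|x2 v| <= m.
        move=> v cv vu; apply: Hm; split; [exact: ltW|exact: le_trans vu uT|exact: le_trans vu uh].
      have i1 := inc1 c u m c0 cu uT Hmu.
      have i2 := inc2 c u m c0 cu uT Hmu.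
      have um : (u - c) * m <= m / 12 by nra.
      have nY1 : `|Y1 u - Y1 c| <= 2 * y.
        by apply: le_trans (ler_normB _ _) _; lra.
      have nY2 : `|Y2 u - Y2 c| <= 2 * y.
        by apply: le_trans (ler_normB _ _) _; lra.
      split; (apply: le_trans (ler_normD _ _) _); rewrite ?normrN.
        by apply: le_trans (lerD nY1 (le_trans i1 um)) _; rewrite lexx.
      by apply: le_trans (lerD nY2 (le_trans i2 um)) _; rewrite lexx.
    + move=> u [cu _ _]; have u0 : 0 <= u by exact: le_trans c0 cu.
      by rewrite !subr_ge0; exact: Vmon.
    + move=> u [cu uT uh]; case: (eqVneq c u) => [<-|ne].
        by left; rewrite subrr.
      have cu' : c < u by rewrite lt_neqAle ne cu.
      case: (SK1 c u c0 cu') => [h|[q [cq qu xq vq]]]; first by left.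
      right; exists q; split => //; [split|lra].
      * exact: ltW.
      * exact: le_trans qu uT.
      * exact: le_trans qu uh.
    + move=> u [cu uT uh]; case: (eqVneq c u) => [<-|ne].
        by left; rewrite subrr.
      have cu' : c < u by rewrite lt_neqAle ne cu.
      case: (SK2 c u c0 cu') => [h|[q [cq qu xq vq]]]; first by left.
      right; exists q; split => //; [split|lra].
      * exact: ltW.
      * exact: le_trans qu uT.
      * exact: le_trans qu uh.
    + lra.
  - by split => //; [exact: ltW|lra].
  - move=> /=; lra.
move=> s s0 sT; apply: Q => //.
have := truncnS_gt (12 * T); set n := (Num.truncn _).+1%:R => hn.
rewrite ler_pdivlMr //; lra.
Qed.
End Det.

Lemma prob_inter {R : realType} d (T : measurableType d) (P : probability T R)
  (A B : set T) (e : R) : measurable A -> measurable B ->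
  ((1 - e / 2)%:E <= P A)%E -> ((1 - e / 2)%:E <= P B)%E ->
  ((1 - e)%:E <= P (A `&` B))%E.
Proof.
move=> mA mB hA hB.
have f X : measurable X -> P X = (fine (P X))%:E.
  move=> mX; rewrite fineK // ge0_fin_numE //.
  exact: (le_lt_trans (probability_le1 P mX) (ltry _)).
have mAB := measurableI _ _ mA mB.
have mAuB := measurableU _ _ mA mB.
have PBfin : (P B < +oo)%E by rewrite (f _ mB) ltry.
have hE : P (A `|` B) = (P A + P B - P (A `&` B))%E by apply: measureUfinr.
have hU := probability_le1 P mAuB.
move: hA hB hU hE.
rewrite (f _ mA) (f _ mB) (f _ mAB) (f _ mAuB) !lee_fin -EFinD.
move=> hA' hB' hU' [] hE'; lra.
Qed.

Unset Implicit Arguments.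

Theorem mainTheorem7 (R : realType) (d : nat -> measure_display)
  (Omega : forall n, measurableType (d n))
  (P : forall n, probability (Omega n) R)
  (B : forall n, Omega n -> \bar R)
  (X10 X20 : forall n, Omega n -> R)
  (Y1 Y2 : forall n, Omega n -> R -> R)
  (Xh1 Xh2 Vh1 Vh2 : forall n, Omega n -> R -> R) :
  (* (B_n, X^n(0), Y^n) is a random element of [0,oo] x R^2 x D^2 *)
  (forall n, measurable_fun setT (B n)) ->
  (forall n w, (0 <= B n w)%E) ->
  (forall n, measurable_fun setT (X10 n)) ->
  (forall n, measurable_fun setT (X20 n)) ->
  (forall n t, 0 <= t -> measurable_fun setT (fun w => Y1 n w t)) ->
  (forall n t, 0 <= t -> measurable_fun setT (fun w => Y2 n w t)) ->
  (forall n w, cadlag (Y1 n w) /\ cadlag (Y2 n w)) ->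
  (* (Xh^n, Vh^n) in D^2 x D^2 solves the constrained system *)
  (forall n w, cadlag (Xh1 n w) /\ cadlag (Xh2 n w) /\
               cadlag (Vh1 n w) /\ cadlag (Vh2 n w)) ->
  (forall n w t, 0 <= t ->
     Xh1 n w t = X10 n w + Y1 n w t
                 + Rintegral lebesgue_measure `[0, t]
                     (fun s => - Xh1 n w s + Xh2 n w s)
                 - Vh1 n w t) ->
  (forall n w t, 0 <= t ->
     Xh2 n w t = X20 n w + Y2 n w t
                 - Rintegral lebesgue_measure `[0, t] (fun s => Xh2 n w s)
                 + Vh1 n w t - Vh2 n w t) ->
  (forall n w t, 0 <= t -> Xh1 n w t <= 0) ->
  (forall n w t, 0 <= t -> ((Xh2 n w t)%:E <= B n w)%E) ->
  (forall n w t, 0 <= t -> 0 <= Vh1 n w t /\ 0 <= Vh2 n w t) ->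
  (forall n w s t, 0 <= s -> s <= t ->
     Vh1 n w s <= Vh1 n w t /\ Vh2 n w s <= Vh2 n w t) ->
  (forall n w, no_charge (Vh1 n w) [set t | Xh1 n w t < 0]) ->
  (forall n w, no_charge (Vh2 n w) [set t | ((Xh2 n w t)%:E < B n w)%E]) ->
  (* stochastic boundedness of the data *)
  stoch_bounded_R2 P X10 X20 ->
  stoch_bounded_D2 P Y1 Y2 ->
  (* conclusion *)
  stoch_bounded_D2 P Xh1 Xh2.
Proof.
move=> _ B0 _ _ _ _ _ cX Eq1 Eq2 X1le _ Vge Vmon nc1 nc2 sbX sbY.
move=> t t0 eps eps0.
have e2 : 0 < eps / 2 by rewrite divr_gt0.
have [M1 HM1] := sbX (eps / 2) e2.
have [M2 HM2] := sbY t t0 (eps / 2) e2.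
pose y := `|M1| + `|M2|.
have y0 : 0 <= y by rewrite addr_ge0.
exists (beta y (Num.truncn (12 * t))) => n.
have [A1 [mA1 [PA1 HA1]]] := HM1 n.
have [A2 [mA2 [PA2 HA2]]] := HM2 n.
exists (A1 `&` A2); split; first exact: measurableI.
split; first exact: prob_inter.
move=> w [wA1 wA2].
have hX := HA1 w wA1; have hY := HA2 w wA2.
move: hX; rewrite /= lee_fin ge_max => /andP[hX1 hX2].
move: hY; rewrite /= ge_max => /andP[hY1 hY2].
have M1y : `|M1| <= y by rewrite lerDl.
have M2y : `|M2| <= y by rewrite lerDr.
have [cx1 [cx2 [cv1 cv2]]] := cX n w.
have D := @det R (Xh1 n w) (Xh2 n w) (Vh1 n w) (Vh2 n w) (Y1 n w) (Y2 n w)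
  (X10 n w) (X20 n w) (B n w) t y cx1 cx2 cv1 cv2 (Eq1 n w) (Eq2 n w) (X1le n w)
  (B0 n w) (Vge n w) (Vmon n w) (nc1 n w) (nc2 n w) y0.
have := D (le_trans hX1 (le_trans (ler_norm _) M1y)) (le_trans hX2 (le_trans (ler_norm _) M1y)).
move=> /(_ _) D'.
have Ysup : forall (Z : R -> R) s, 0 <= s -> s <= t ->
    (supnorm Z t <= M2%:E)%E -> `|Z s| <= y.
  move=> Z s s0 st hZ; rewrite -lee_fin.
  apply: le_trans _ (le_trans hZ _); last by rewrite lee_fin (le_trans (ler_norm _) M2y).
  by apply: ereal_sup_ubound; exists s => //=; rewrite in_itv /= s0 st.
have {}D' := D' (fun s s0 st => conj (Ysup _ s s0 st hY1) (Ysup _ s s0 st hY2)).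
rewrite /= ge_max; apply/andP; split; apply: ge_ereal_sup => _ [s /= + <-];
  rewrite in_itv /= => /andP[s0 st]; rewrite lee_fin; apply: le_trans (D' s s0 st).
  by rewrite lerDl.
by rewrite lerDr.
Qed.
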